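(* Let $\pi$ be a supercuspidal representation of $G$ with trivial central character and $a(\pi)=4n$, $n\ge1$, let $T$ be an inert torus in canonical form, let $\chi_\pi=\chi_{\theta_\pi,T}$, and let $v_0\in\pi$ be a minimal vector for $T$. Let $\Phi_0(g)=\langle\pi(g)v_0,v_0\rangle/\langle v_0,v_0\rangle$, where $\langle\cdot,\cdot\rangle$ is a $G$-invariant inner product on $\pi$. Then $\Phi_0(g)=\chi_\pi(g)$ for $g\in ZK_T(n)$ and $\Phi_0(g)=0$ for $g\notin ZK_T(n)$.
   Context: $F$ is a non-archimedean local field of characteristic zero with ring of integers $\mathfrak o$, maximal ideal $\mathfrak p$, uniformizer $\varpi$, odd residue cardinality; $E$ the unramified quadratic extension; $G=\mathrm{GL}_2(F)$, $Z$ its centre. $\psi$ is an additive character of $F$ trivial on $\mathfrak o$ but not $\varpi^{-1}\mathfrak o$, $\psi_E=\psi\circ\mathrm{Tr}_{E/F}$. $a(\pi)$ is the conductor exponent of $\pi$; for a character $\chi$ of $E^\times$, $a(\chi)$ is the least $m\ge0$ with $\chi$ trivial on $\{x\in\mathfrak o_E^\times:v(x-1)\ge m\}$. Inert torus in canonical form: $T=T_\alpha=\{\begin{pmatrix}x&y\\-\alpha y&x\end{pmatrix}\ne0\}$, $\alpha\in\mathfrak o^\times$, $-\alpha$ non-square, identified with $E^\times$ via $x+y\sqrt{-\alpha}\mapsto\begin{pmatrix}x&y\\-\alpha y&x\end{pmatrix}$; $w_\alpha=\begin{pmatrix}0&1\\-\alpha&0\end{pmatrix}$; $K(n)=\{g\in\mathrm{GL}_2(\mathfrak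 o):g\equiv1\bmod\mathfrak p^n\}$; $K_T(n)=\{\begin{pmatrix}a&b\\c&d\end{pmatrix}\in\mathrm{GL}_2(\mathfrak o):a-d,\ c+b\alpha\in\mathfrak p^n\}$, $ZK_T(n)=TK(n)$. For $\theta$ with $a(\theta)=2n$, $\theta|_{F^\times}=1$: fix $a_{\theta,T}\in\mathfrak o^\times$ with $\psi_E(\varpi^{-n}a_{\theta,T}\sqrt{-\alpha}u)=\theta(1+\varpi^nu)$ ($u\in\mathfrak o_E$), and $\chi_{\theta,T}(t(1+\varpi^ng))=\theta(t)\psi(\varpi^{-n}a_{\theta,T}\mathrm{Tr}(w_\alpha g))$, a character of $ZK_T(n)$. $\theta_\pi$ is a fixed character of $E^\times$ with $a(\theta_\pi)=2n$, $\theta_\pi|_{F^\times}=1$ and $\pi\simeq c\text{-}\mathrm{Ind}_{ZK_T(n)}^G\chi_{\theta_\pi,T}$ for all such $T$. A minimal vector for $T$ is a nonzero $v\in\pi$ with $\pi(k)v=\chi_{\theta_\pi,T}(k)v$ for all $k\in ZK_T(n)$. *)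

(* Defs.v *)
From HB Require Import structures.
From mathcomp Require Import all_boot all_order all_algebra.
Set Implicit Arguments. Unset Strict Implicit. Unset Printing Implicit Defensive.
Import Order.TTheory GRing.Theory Num.Theory.
Local Open Scope ring_scope.

(* Non-archimedean local fields, given by a normalized discrete        *)
(* valuation v : F -> int (the value v 0 is irrelevant: 0 is treated   *)
(* as having valuation +oo through [val_ge]).                          *)
Section LocalField.
Variables (F : fieldType) (v : F -> int).

Definition val_ge (x : F) (m : int) : bool := (x == 0) || (m <= v x).

Definition in_o (x : F) : bool := val_ge x 0.

Definition unit_o (x : F) : bool := (x != 0) && (v x == 0).

Definition is_dvaluation : Prop :=
  (forall x y, x != 0 -> y != 0 -> v (x * y) = v x + v y) /\
  (forall x y m, val_ge x m -> val_ge y m -> val_ge (x + y) m).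

Definition val_cauchy (u : nat -> F) : Prop :=
  forall m : int, exists N : nat, forall i j : nat, (N <= i)%N -> (N <= j)%N ->
    val_ge (u i - u j) m.

Definition val_converges (u : nat -> F) (l : F) : Prop :=
  forall m : int, exists N : nat, forall i : nat, (N <= i)%N -> val_ge (u i - l) m.

Definition val_complete : Prop :=
  forall u, val_cauchy u -> exists l, val_converges u l.

Definition residue_card (q : nat) : Prop :=
  exists s : seq F, size s = q /\ (forall x, x \in s -> in_o x) /\
    (forall i j, (i < q)%N -> (j < q)%N -> val_ge (s`_i - s`_j) 1 -> i = j) /\
    (forall x, in_o x -> exists2 y, y \in s & val_ge (x - y) 1).

Definition char0 : Prop := forall k : nat, (k.+1)%:R != 0 :> F.

Definition nonarch_local_field_odd (unif : F) : Prop :=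
  [/\ is_dvaluation, unif != 0 /\ v unif = 1, val_complete, char0 &
      exists q, residue_card q /\ odd q].

Definition std_add_char (C : fieldType) (psi : F -> C) : Prop :=
  [/\ forall x y, psi (x + y) = psi x * psi y,
      forall x, in_o x -> psi x = 1 &
      exists x, val_ge x (-1) /\ psi x != 1].

(* E = F(sqrt(-alpha)), elements x + y sqrt(-alpha) written as (x, y). *)
(* When alpha in o^x and -alpha is a non-square, E/F is the unramified  *)
(* quadratic extension and v_E(x + y sqrt(-alpha)) = min(v x, v y).      *)
Variable alpha : F.

Definition eadd (e1 e2 : F * F) : F * F := (e1.1 + e2.1, e1.2 + e2.2).
Definition emul (e1 e2 : F * F) : F * F :=
  (e1.1 * e2.1 - alpha * (e1.2 * e2.2), e1.1 * e2.2 + e1.2 * e2.1).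
Definition escal (c : F) : F * F := (c, 0).
Definition esqrt : F * F := (0, 1).
Definition etr (e : F * F) : F := e.1 *+ 2.

Definition vE_ge (e : F * F) (m : int) : bool := val_ge e.1 m && val_ge e.2 m.
Definition in_oE (e : F * F) : bool := vE_ge e 0.
Definition unit_oE (e : F * F) : bool := vE_ge e 0 && ~~ vE_ge e 1.
Definition UE (m : nat) (e : F * F) : bool :=
  unit_oE e && vE_ge (eadd e (escal (-1))) m%:Z.

Definition is_charE (C : fieldType) (theta : F * F -> C) : Prop :=
  (forall e, e != (0, 0) -> theta e != 0) /\
  (forall e1 e2, e1 != (0, 0) -> e2 != (0, 0) ->
     theta (emul e1 e2) = theta e1 * theta e2).

Definition trivial_on_UE (C : fieldType) (theta : F * F -> C) (m : nat) : Prop :=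
  forall e, UE m e -> theta e = 1.

Definition conductorE (C : fieldType) (theta : F * F -> C) (m : nat) : Prop :=
  trivial_on_UE theta m /\ forall m', (m' < m)%N -> ~ trivial_on_UE theta m'.

(* GL_2(F) inside 'M[F]_2 (elements are the matrices in unitmx).       *)
Definition mx2 (a b c d : F) : 'M[F]_2 :=
  \matrix_(i < 2, j < 2)
    if i == ord0 then (if j == ord0 then a else b) else (if j == ord0 then c else d).

(* the torus T_alpha, identified with E^x *)
Definition tmat (e : F * F) : 'M[F]_2 := mx2 e.1 e.2 (- alpha * e.2) e.1.
Definition walpha : 'M[F]_2 := mx2 0 1 (- alpha) 0.

Definition in_M2o (g : 'M[F]_2) : Prop := forall i j, in_o (g i j).
Definition in_GL2o (g : 'M[F]_2) : Prop := in_M2o g /\ unit_o (\det g).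

Definition Kn (n : nat) (g : 'M[F]_2) : Prop :=
  in_GL2o g /\ forall i j, val_ge ((g - 1) i j) n%:Z.

(* Z K_T(n) = T K(n) *)
Definition ZKT (n : nat) (g : 'M[F]_2) : Prop :=
  exists2 e, e != (0, 0) & exists2 k, Kn n k & g = tmat e * k.

Definition is_chi_theta_T (C : fieldType) (unif : F) (n : nat)
   (theta : F * F -> C) (psi : F -> C) (a : F) (chi : 'M[F]_2 -> C) : Prop :=
  forall e g, e != (0, 0) -> in_M2o g ->
    chi (tmat e * (1 + unif ^+ n *: g)) =
      theta e * psi (unif ^- n * a * \tr (walpha * g)).

(* elements of c-Ind_H^G chi, realized as functions on 'M[F]_2 vanishing *)
(* outside GL_2(F), left (H,chi)-equivariant, compactly supported mod H.  *)
Definition in_cInd (C : fieldType) (H : 'M[F]_2 -> Prop) (chi : 'M[F]_2 -> C)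
   (f : 'M[F]_2 -> C) : Prop :=
  [/\ forall g, g \notin unitmx -> f g = 0,
      forall k g, H k -> g \in unitmx -> f (k * g) = chi k * f g &
      exists gs : seq 'M[F]_2, forall g, f g != 0 ->
         exists2 h, h \in gs & exists2 k, H k & g = k * h].

Definition is_rep (C : fieldType) (V : lmodType C) (rho : 'M[F]_2 -> V -> V) : Prop :=
  [/\ forall g, g \in unitmx -> forall c (x y : V), rho g (c *: x + y) = c *: rho g x + rho g y,
      forall x, rho 1 x = x &
      forall g h, g \in unitmx -> h \in unitmx -> forall x, rho (g * h) x = rho g (rho h x)].

Definition iso_cInd (C : fieldType) (V : lmodType C) (rho : 'M[F]_2 -> V -> V)
   (H : 'M[F]_2 -> Prop) (chi : 'M[F]_2 -> C) : Prop :=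
  exists Phi : V -> 'M[F]_2 -> C,
    [/\ forall c x y, Phi (c *: x + y) = (fun g => c * Phi x g + Phi y g),
        injective Phi,
        forall x, in_cInd H chi (Phi x),
        forall f, in_cInd H chi f -> exists x, Phi x = f &
        forall g x, g \in unitmx -> Phi (rho g x) = (fun h => Phi x (h * g))].

End LocalField.

Definition is_inv_inner_product (F : fieldType) (C : numClosedFieldType) (V : lmodType C)
   (rho : 'M[F]_2 -> V -> V) (ip : V -> V -> C) : Prop :=
  [/\ forall c x y z, ip (c *: x + y) z = c * ip x z + ip y z,
      forall x y, ip y x = (ip x y)^*,
      forall x, x != 0 -> 0 < ip x x &
      forall g, g \in unitmx -> forall x y, ip (rho g x) (rho g y) = ip x y].

(* Main.v *)
Require Import Defs.
From HB Require Import structures.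
From mathcomp Require Import all_boot all_order all_algebra.
From mathcomp Require Import ring zify.
Set Implicit Arguments. Unset Strict Implicit. Unset Printing Implicit Defensive.
Import Order.TTheory GRing.Theory Num.Theory.
Local Open Scope ring_scope.

Section M2.
Variable F : fieldType.
Implicit Types (a b c d x : F) (A B : 'M[F]_2).

Lemma ord2P (i : 'I_2) : i = 0 \/ i = 1.
Proof. by case: i => [[|[|k]]] Hi //; [left|right]; apply: val_inj. Qed.

Lemma mx2_00 a b c d : mx2 a b c d 0 0 = a. Proof. by rewrite mxE. Qed.
Lemma mx2_01 a b c d : mx2 a b c d 0 1 = b. Proof. by rewrite mxE. Qed.
Lemma mx2_10 a b c d : mx2 a b c d 1 0 = c. Proof. by rewrite mxE. Qed.
Lemma mx2_11 a b c d : mx2 a b c d 1 1 = d. Proof. by rewrite mxE. Qed.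
Definition mx2E := (mx2_00, mx2_01, mx2_10, mx2_11).

Lemma mx2_eta A : A = mx2 (A 0 0) (A 0 1) (A 1 0) (A 1 1).
Proof.
apply/matrixP=> i j; rewrite mxE.
by case: (ord2P i) => ->; case: (ord2P j) => ->.
Qed.

Lemma mx2_eq a b c d a' b' c' d' :
  a = a' -> b = b' -> c = c' -> d = d' -> mx2 a b c d = mx2 a' b' c' d'.
Proof. by move=> -> -> -> ->. Qed.

Lemma mx2_mul a b c d a' b' c' d' :
  mx2 a b c d * mx2 a' b' c' d' =
  mx2 (a*a' + b*c') (a*b' + b*d') (c*a' + d*c') (c*b' + d*d').
Proof.
apply/matrixP=> i j; rewrite -mulmxE !mxE !big_ord_recr big_ord0 /= add0r !mxE.
by case: (ord2P i) => ->; case: (ord2P j) => ->.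
Qed.

Lemma mx2_add a b c d a' b' c' d' :
  mx2 a b c d + mx2 a' b' c' d' = mx2 (a + a') (b + b') (c + c') (d + d').
Proof.
apply/matrixP=> i j; rewrite !mxE.
by case: (ord2P i) => ->; case: (ord2P j) => ->.
Qed.

Lemma mx2_opp a b c d : - mx2 a b c d = mx2 (- a) (- b) (- c) (- d).
Proof.
apply/matrixP=> i j; rewrite !mxE.
by case: (ord2P i) => ->; case: (ord2P j) => ->.
Qed.

Lemma mx2_scale x a b c d : x *: mx2 a b c d = mx2 (x * a) (x * b) (x * c) (x * d).
Proof.
apply/matrixP=> i j; rewrite !mxE.
by case: (ord2P i) => ->; case: (ord2P j) => ->.
Qed.

Lemma mx2_1 : (1 : 'M[F]_2) = mx2 1 0 0 1.
Proof.
apply/matrixP=> i j; rewrite !mxE.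
by case: (ord2P i) => ->; case: (ord2P j) => ->.
Qed.

Lemma mx2_det a b c d : \det (mx2 a b c d) = a * d - b * c.
Proof.
rewrite (expand_det_row _ 0) !big_ord_recr big_ord0 /= add0r.
rewrite /cofactor !det_mx11 !mxE /=.
rewrite !add0n expr0 expr1; ring.
Qed.

Lemma mx2_tr a b c d : \tr (mx2 a b c d) = a + d.
Proof.
by rewrite /mxtrace !big_ord_recr big_ord0 /= add0r !mxE.
Qed.

End M2.

Section Val.
Variables (F : fieldType) (v : F -> int).
Hypothesis hmul : forall x y : F, x != 0 -> y != 0 -> v (x * y) = v x + v y.
Hypothesis hadd : forall (x y : F) m, val_ge v x m -> val_ge v y m -> val_ge v (x + y) m.
Implicit Types (x y z t : F) (m k : int).

Lemma v1 : v 1 = 0.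
Proof. have := hmul (oner_neq0 F) (oner_neq0 F); rewrite mulr1 => h. by apply/(addrI (v 1)); rewrite addr0 -h. Qed.

Lemma vN1 : v (-1) = 0.
Proof.
have h : (-1 : F) != 0 by rewrite oppr_eq0 oner_neq0.
have := hmul h h; rewrite mulrNN mulr1 v1 => e. lia.
Qed.

Lemma vN x : v (- x) = v x.
Proof.
have [->|x0] := eqVneq x 0; first by rewrite oppr0.
have h : (-1 : F) != 0 by rewrite oppr_eq0 oner_neq0.
by rewrite -mulN1r hmul // vN1 add0r.
Qed.

Lemma vV x : x != 0 -> v (x^-1) = - v x.
Proof.
move=> x0; have xi : x^-1 != 0 by rewrite invr_eq0.
have := hmul x0 xi; rewrite mulfV // v1; lia.
Qed.

Lemma val_ge0 m : val_ge v 0 m.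
Proof. by rewrite /val_ge eqxx. Qed.

Lemma val_geP x m : x != 0 -> val_ge v x m = (m <= v x).
Proof. by rewrite /val_ge => /negbTE ->. Qed.

Lemma val_geN x m : val_ge v x m -> val_ge v (- x) m.
Proof. by rewrite /val_ge oppr_eq0 vN. Qed.

Lemma val_geB x y m : val_ge v x m -> val_ge v y m -> val_ge v (x - y) m.
Proof. by move=> hx hy; apply: hadd => //; apply: val_geN. Qed.

Lemma val_ge_le x m k : val_ge v x m -> k <= m -> val_ge v x k.
Proof. rewrite /val_ge; case/orP=> [h|h] hk; first by rewrite h. by rewrite (le_trans hk h) orbT. Qed.

Lemma val_geM x y m k : val_ge v x m -> val_ge v y k -> val_ge v (x * y) (m + k).
Proof.
have [->|x0] := eqVneq x 0; first by move=> *; rewrite mul0r val_ge0.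
have [->|y0] := eqVneq y 0; first by move=> *; rewrite mulr0 val_ge0.
rewrite !val_geP ?mulf_neq0 // hmul //; lia.
Qed.

Lemma val_ge_self x : val_ge v x (v x).
Proof. by rewrite /val_ge lexx orbT. Qed.

Lemma val_ge1 : val_ge v 1 0.
Proof. by rewrite val_geP ?oner_neq0 // v1. Qed.

Lemma not_val_ge1 : ~ val_ge v 1 1.
Proof. by rewrite val_geP ?oner_neq0 // v1. Qed.

Lemma unit_oP x : unit_o v x <-> in_o v x /\ ~ val_ge v x 1.
Proof.
rewrite /unit_o /in_o; split.
  case/andP=> x0 /eqP vx; rewrite !val_geP // vx; split=> //.
case=> h1 h2; have x0 : x != 0 by apply: contra_notN h2 => /eqP ->; rewrite val_ge0.
by move: h1 h2; rewrite !val_geP // x0 /=; move=> *; apply/eqP; lia.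
Qed.

Lemma unit_add x t : unit_o v x -> val_ge v t 1 -> unit_o v (x + t).
Proof.
move=> /unit_oP [h0 h1] ht; apply/unit_oP; split.
  by apply: hadd => //; apply: val_ge_le ht _.
move=> h; apply: h1; have -> : x = (x + t) - t by rewrite addrK.
exact: val_geB.
Qed.

Lemma unit_oM x y : unit_o v x -> unit_o v y -> unit_o v (x * y).
Proof.
rewrite /unit_o => /andP[x0 /eqP vx] /andP[y0 /eqP vy].
by rewrite mulf_neq0 //= hmul // vx vy.
Qed.

Lemma unit_oV x : unit_o v x -> unit_o v x^-1.
Proof.
rewrite /unit_o => /andP[x0 /eqP vx].
by rewrite invr_eq0 x0 /= vV // vx.
Qed.

Lemma unit_o_neq0 x : unit_o v x -> x != 0.
Proof. by case/andP. Qed.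

Lemma unit_o_in x : unit_o v x -> in_o v x.
Proof. by case/unit_oP. Qed.

Lemma val_ge_unitM x y m : unit_o v x -> val_ge v y m -> val_ge v (x * y) m.
Proof. by case/unit_oP => h1 _ hy; have := val_geM h1 hy; rewrite add0r. Qed.

Lemma val_ge_inM x y m : in_o v x -> val_ge v y m -> val_ge v (x * y) m.
Proof. by move=> h1 hy; have := val_geM h1 hy; rewrite add0r. Qed.

Lemma in_oD x y : in_o v x -> in_o v y -> in_o v (x + y).
Proof. exact: hadd. Qed.
Lemma in_oB x y : in_o v x -> in_o v y -> in_o v (x - y).
Proof. exact: val_geB. Qed.
Lemma in_oM x y : in_o v x -> in_o v y -> in_o v (x * y).
Proof. by move=> h1 h2; have := val_geM h1 h2. Qed.
Lemma in_oN x : in_o v x -> in_o v (- x).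
Proof. exact: val_geN. Qed.
Lemma in_o0 : in_o v 0. Proof. exact: val_ge0. Qed.
Lemma in_o1 : in_o v 1. Proof. exact: val_ge1. Qed.

Lemma val_ge_in x m : val_ge v x m -> 0 <= m -> in_o v x.
Proof. by move=> h hm; apply: val_ge_le h hm. Qed.

Variable alpha : F.
Hypothesis hcomp : val_complete v.
Hypothesis halpha : unit_o v alpha.
Hypothesis hnsq : forall z : F, z * z != - alpha.

Fixpoint hseq (z : F) (k : nat) : F :=
  match k with
  | 0 => z
  | k'.+1 => let s := hseq z k' in s - (s * s + alpha) / (2%:R * s)
  end.

Lemma unit_oN x : unit_o v x -> unit_o v (- x).
Proof. by rewrite /unit_o oppr_eq0 vN. Qed.

Lemma hensel_nonsq (h2 : unit_o v 2%:R) z : in_o v z -> ~ val_ge v (z * z + alpha) 1.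
Proof.
move=> hz hf.
have uz : unit_o v z.
  apply/unit_oP; split=> // hz1.
  have : unit_o v (z * z) .
    have -> : z * z = - alpha + (z * z + alpha) by rewrite addrC addrK.
    by apply: unit_add => //; apply: unit_oN.
  case/unit_oP=> _; apply.
  have h := val_geM hz1 hz1; apply: (val_ge_le h); lia.
pose s := hseq z.
have inv : forall k : nat, unit_o v (s k) /\ val_ge v (s k * s k + alpha) (k.+1)%:Z.
  elim=> [|k [uk fk]]; first by split.
  have sk0 : s k != 0 by case/andP: uk.
  have t0 : 2%:R * s k != 0 by rewrite mulf_neq0 // unit_o_neq0.
  set t := (s k * s k + alpha) / (2%:R * s k).
  have ht : val_ge v t (k.+1)%:Z.
    rewrite /t mulrC; apply: val_ge_unitM => //.
    by apply: unit_oV; apply: unit_oM.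
  have -> : s k.+1 = s k - t by [].
  split.
    apply: unit_add => //; apply: val_geN; apply: val_ge_le ht _; lia.
  have -> : (s k - t) * (s k - t) + alpha = t * t.
    rewrite /t; field; rewrite sk0 /=; exact: unit_o_neq0 h2.
  have h := val_geM ht ht; apply: (val_ge_le h); lia.
have step : forall k : nat, val_ge v (s k.+1 - s k) (k.+1)%:Z.
  move=> k; have [uk fk] := inv k.
  have sk0 : s k != 0 by case/andP: uk.
  have -> : s k.+1 - s k = - ((s k * s k + alpha) / (2%:R * s k)).
    by rewrite /= addrC addKr.
  apply: val_geN; rewrite mulrC; apply: val_ge_unitM => //.
  by apply: unit_oV; apply: unit_oM.
have tele : forall j d, val_ge v (s (j + d)%N - s j) (j.+1)%:Z.
  move=> j; elim=> [|d IH]; first by rewrite addn0 subrr val_ge0.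
  have -> : s (j + d.+1)%N - s j = (s (j + d).+1 - s (j + d)%N) + (s (j + d)%N - s j).
    by rewrite addnS addrA subrK.
  apply: hadd => //; apply: val_ge_le (step _) _; lia.
have cauchy : val_cauchy v s.
  move=> m; exists `|m|%N => i j hi hj.
  have -> : s i - s j = (s i - s `|m|%N) - (s j - s `|m|%N).
    by rewrite opprB addrA subrK.
  have ge : forall i, (`|m| <= i)%N -> val_ge v (s i - s `|m|%N) m.
    move=> i' hi'; rewrite -(subnKC hi'); apply: val_ge_le (tele _ _) _; lia.
  by apply: val_geB; apply: ge.
have [l hl] := hcomp cauchy.
have fl : forall m : int, 0 <= m -> val_ge v (l * l + alpha) m.
  move=> m hm; have [N hN] := hl m.
  pose i := maxn N `|m|%N.
  have hi := hN i (leq_maxl _ _).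
  have [ui fi] := inv i.
  have -> : l * l + alpha = (s i * s i + alpha) - (s i - l) * (s i + l).
    ring.
  apply: val_geB.
    apply: val_ge_le fi _; have := leq_maxr N `|m|%N; rewrite -/i; lia.
  have -> : m = m + 0 by rewrite addr0.
  apply: val_geM => //.
  have -> : s i + l = s i + s i - (s i - l) by ring.
  apply: val_geB; first by apply: hadd; apply: unit_o_in.
  exact: val_ge_le hi hm.
have [f0|f0] := eqVneq (l * l + alpha) 0.
  by move: (hnsq l); rewrite -(subr0 (l * l)) -f0 opprD addrA subrr add0r eqxx.
have := fl ((`|v (l * l + alpha)|%N)%:Z + 1) ltac:(lia).
rewrite val_geP //; lia.
Qed.

Lemma in_M2o_mx2 a b c d : in_o v a -> in_o v b -> in_o v c -> in_o v d ->
  in_M2o v (mx2 a b c d).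
Proof.
move=> ha hb hc hd i j.
by case: (ord2P i) => ->; case: (ord2P j) => ->; rewrite !mx2E.
Qed.

Lemma val_ge_mx2 a b c d m : val_ge v a m -> val_ge v b m -> val_ge v c m -> val_ge v d m ->
  forall i j, val_ge v (mx2 a b c d i j) m.
Proof.
move=> ha hb hc hd i j.
by case: (ord2P i) => ->; case: (ord2P j) => ->; rewrite !mx2E.
Qed.

Lemma in_M2o_entries (A : 'M[F]_2) : in_M2o v A ->
  [/\ in_o v (A 0 0), in_o v (A 0 1), in_o v (A 1 0) & in_o v (A 1 1)].
Proof. by move=> h; split; apply: h. Qed.

Lemma ns_unit (h2 : unit_o v 2%:R) x y : in_o v x -> in_o v y -> (x = 1 \/ y = 1) ->
  unit_o v (x * x + alpha * (y * y)).
Proof.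
move=> hx hy [ex|ey].
  rewrite ex mul1r.
  have [y1|ny1] := boolP (val_ge v y 1).
    apply: unit_add; first by apply/andP; split; [exact: oner_neq0 | rewrite v1].
    apply: val_ge_unitM => //.
    have h := val_geM y1 y1; apply: (val_ge_le h); lia.
  have uy : unit_o v y by apply/unit_oP; split => //; apply/negP.
  have y0 : y != 0 := unit_o_neq0 uy.
  have uyi : in_o v y^-1 by apply: unit_o_in; apply: unit_oV.
  have hn := hensel_nonsq h2 uyi.
  have -> : 1 + alpha * (y * y) = (y * y) * (y^-1 * y^-1 + alpha).
    by field.
  apply: unit_oM; first by apply: unit_oM.
  by apply/unit_oP; split => //; apply: in_oD => //; [apply: in_oM|apply: unit_o_in].
rewrite ey !mul1r mulr1.
have hn := hensel_nonsq h2 hx.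
by apply/unit_oP; split => //; apply: in_oD => //; [apply: in_oM|apply: unit_o_in].
Qed.

Variable n : nat.
Hypothesis hn : (1 <= n)%N.

Definition tw (Y : 'M[F]_2) := \tr (walpha alpha * Y).

Definition core_concl (g : 'M[F]_2) :=
  exists Y, exists Y', [/\ in_M2o v Y, in_M2o v Y', Y * g = g * Y',
     tw Y - tw Y' != 0 & ~ val_ge v (tw Y - tw Y') n%:Z].

Lemma nge_n c : ~ val_ge v c 1 -> ~ val_ge v c n%:Z.
Proof. by move=> c1 c2; apply: c1; apply: (val_ge_le c2); lia. Qed.

Lemma nge_neq0 c m : ~ val_ge v c m -> c != 0.
Proof. by apply: contra_notN => /eqP ->; apply: val_ge0. Qed.

Lemma ZKT_of_cong p q r s :
  in_o v p -> in_o v q -> in_o v r -> in_o v s ->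
  unit_o v (p * s - q * r) ->
  val_ge v (r + alpha * q) n%:Z -> val_ge v (s - p) n%:Z ->
  ZKT v alpha n (mx2 p q r s).
Proof.
move=> hp hq hr hs hD c1 c2.
set N0 := p * p + alpha * (q * q).
have hDN : val_ge v ((p * s - q * r) - N0) n%:Z.
  have -> : (p * s - q * r) - N0 = p * (s - p) - q * (r + alpha * q) by rewrite /N0; ring.
  by apply: val_geB; apply: val_ge_inM.
have uN : unit_o v N0.
  have -> : N0 = (p * s - q * r) + - ((p * s - q * r) - N0) by ring.
  apply: unit_add => //; apply: val_geN; apply: (val_ge_le hDN); lia.
have N00 : N0 != 0 := unit_o_neq0 uN.
have uNi : unit_o v N0^-1 := unit_oV uN.
exists (p, q).
  apply: contra_neq N00 => -[ep eq']; rewrite /N0 ep eq'; ring.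
set k := mx2 (1 + N0^-1 * (- q * (r + alpha * q))) (N0^-1 * (- q * (s - p)))
             (N0^-1 * (p * (r + alpha * q))) (1 + N0^-1 * (p * (s - p))).
have e1 : val_ge v (N0^-1 * (- q * (r + alpha * q))) n%:Z.
  by apply: val_ge_unitM => //; apply: val_ge_inM => //; apply: in_oN.
have e2 : val_ge v (N0^-1 * (- q * (s - p))) n%:Z.
  by apply: val_ge_unitM => //; apply: val_ge_inM => //; apply: in_oN.
have e3 : val_ge v (N0^-1 * (p * (r + alpha * q))) n%:Z.
  by apply: val_ge_unitM => //; apply: val_ge_inM.
have e4 : val_ge v (N0^-1 * (p * (s - p))) n%:Z.
  by apply: val_ge_unitM => //; apply: val_ge_inM.
have n0 : (0 <= n%:Z)%R by [].
exists k.
  split; first split.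
  - apply: in_M2o_mx2; try (apply: in_oD; first exact: in_o1); by apply: val_ge_in; eauto.
  - rewrite mx2_det.
    have -> : (1 + N0^-1 * (- q * (r + alpha * q))) * (1 + N0^-1 * (p * (s - p))) -
      N0^-1 * (- q * (s - p)) * (N0^-1 * (p * (r + alpha * q))) = (p * s - q * r) / N0.
      by rewrite /N0; field; rewrite /N0 in N00.
    by apply: unit_oM.
  - move=> i j; rewrite mx2_1 mx2_opp mx2_add; apply: val_ge_mx2;
    by rewrite ?addrK ?subrr ?oppr0 ?addr0 ?(addrC 1) ?addrK.
rewrite /tmat /k mx2_mul /=; apply: mx2_eq; rewrite /N0 in N00 *; field => //.
Qed.


Lemma finish (Y Y' g : 'M[F]_2) : in_M2o v Y -> in_M2o v Y' -> Y * g = g * Y' ->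
  ~ val_ge v (tw Y - tw Y') n%:Z -> core_concl g.
Proof.
move=> h1 h2' h3 h4; exists Y, Y'; split => //; exact: nge_neq0 h4.
Qed.

Lemma core_prim (h2 : unit_o v 2%:R) p q r s : in_o v p -> in_o v q -> in_o v r -> in_o v s ->
  [\/ p = 1, q = 1, r = 1 | s = 1] -> p * s - q * r != 0 ->
  ~ ZKT v alpha n (mx2 p q r s) -> core_concl (mx2 p q r s).
Proof.
move=> hp hq hr hs h1 D0 nZ.
have hD : in_o v (p * s - q * r) by apply: in_oB; apply: in_oM.
have [hD1|hD1] := boolP (val_ge v (p * s - q * r) 1).
  have [hpq|hrs] : (p = 1 \/ q = 1) \/ (r = 1 \/ s = 1) by case: h1; tauto.
    have uN := ns_unit h2 hp hq hpq.
    apply: (@finish ((p * s - q * r) *: mx2 0 0 1 0)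
                    (mx2 s (-q) (-r) p * mx2 0 0 1 0 * mx2 p q r s)).
    - rewrite mx2_scale; apply: in_M2o_mx2; rewrite ?mulr0 ?mulr1; by [apply: in_o0|].
    - rewrite !mx2_mul; apply: in_M2o_mx2;
        repeat first [apply: in_oD | apply: in_oM | apply: in_oN | assumption | apply: in_o0 | apply: in_o1].
    - rewrite mx2_scale !mx2_mul; apply: mx2_eq; ring.
    - rewrite /tw /walpha mx2_scale !mx2_mul !mx2_tr.
      set c := (X in ~ val_ge v X _).
      have -> : c = (p * s - q * r) - (p * p + alpha * (q * q)) by rewrite /c; ring.
      apply: nge_n => hc; case/unit_oP: uN => _; apply.
      have -> : p * p + alpha * (q * q) = (p * s - q * r) - ((p * s - q * r) - (p * p + alpha * (q * q))) by ring.
      exact: val_geB.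
  have uN := ns_unit h2 hr hs hrs.
  apply: (@finish ((p * s - q * r) *: mx2 0 1 0 0)
                  (mx2 s (-q) (-r) p * mx2 0 1 0 0 * mx2 p q r s)).
  - rewrite mx2_scale; apply: in_M2o_mx2; rewrite ?mulr0 ?mulr1; by [apply: in_o0|].
  - rewrite !mx2_mul; apply: in_M2o_mx2;
      repeat first [apply: in_oD | apply: in_oM | apply: in_oN | assumption | apply: in_o0 | apply: in_o1].
  - rewrite mx2_scale !mx2_mul; apply: mx2_eq; ring.
  - rewrite /tw /walpha mx2_scale !mx2_mul !mx2_tr.
    set c := (X in ~ val_ge v X _).
    have -> : c = (r * r + alpha * (s * s)) - alpha * (p * s - q * r) by rewrite /c; ring.
    apply: nge_n => hc; case/unit_oP: uN => _; apply.
    have -> : r * r + alpha * (s * s) = ((r * r + alpha * (s * s)) - alpha * (p * s - q * r)) + alpha * (p * s - q * r) by ring.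
    apply: hadd => //; apply: val_ge_unitM => //.
have uD : unit_o v (p * s - q * r) by apply/unit_oP; split => //; apply/negP.
have [c1|c1] := boolP (val_ge v (r + alpha * q) n%:Z); last first.
  apply: (@finish (mx2 p 0 r 0) (mx2 p q 0 0)).
  - by apply: in_M2o_mx2 => //; apply: in_o0.
  - by apply: in_M2o_mx2 => //; apply: in_o0.
  - rewrite !mx2_mul; apply: mx2_eq; ring.
  - rewrite /tw /walpha !mx2_mul !mx2_tr.
    set c := (X in ~ val_ge v X _).
    have -> : c = r + alpha * q by rewrite /c; ring.
    by apply/negP.
have [c2|c2] := boolP (val_ge v (s - p) n%:Z); last first.
  apply: (@finish (mx2 q 0 s 0) (mx2 0 0 p q)).
  - by apply: in_M2o_mx2 => //; apply: in_o0.
  - by apply: in_M2o_mx2 => //; apply: in_o0.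
  - rewrite !mx2_mul; apply: mx2_eq; ring.
  - rewrite /tw /walpha !mx2_mul !mx2_tr.
    set c := (X in ~ val_ge v X _).
    have -> : c = s - p by rewrite /c; ring.
    by apply/negP.
by exfalso; apply: nZ; apply: ZKT_of_cong.
Qed.


Lemma min_seq (s : seq F) : has (fun x => x != 0) s ->
  exists c, [/\ c \in s, c != 0 & forall x, x \in s -> val_ge v x (v c)].
Proof.
elim: s => [//|x s IH] /=.
have [x0|x0] := eqVneq x 0.
  rewrite /=; move=> /IH [c [cs c0 hc]]; exists c; split => //.
    by rewrite inE cs orbT.
  by move=> y; rewrite inE => /orP[/eqP->|/hc]; [rewrite x0 val_ge0|].
move=> _.
have [hs|hs] := boolP (has (fun x => x != 0) s).
  have [c [cs c0 hc]] := IH hs.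
  have [le|lt] := boolP (v c <= v x).
    exists c; split => //; first by rewrite inE cs orbT.
    by move=> y; rewrite inE => /orP[/eqP->|/hc]; [rewrite val_geP|].
  exists x; split => //; first by rewrite inE eqxx.
  move=> y; rewrite inE => /orP[/eqP->|/hc h]; first exact: val_ge_self.
  by apply: (val_ge_le h); move: lt; rewrite -ltNge; apply: ltW.
exists x; split => //; first by rewrite inE eqxx.
move=> y; rewrite inE => /orP[/eqP->|ys]; first exact: val_ge_self.
move: hs; rewrite -all_predC => /allP /(_ y ys) /=; rewrite negbK => /eqP ->.
exact: val_ge0.
Qed.

Lemma tmat_scale c (e : F * F) : tmat alpha (c * e.1, c * e.2) = c *: tmat alpha e.
Proof. by rewrite /tmat mx2_scale /=; apply: mx2_eq; ring. Qed.

Lemma core (h2 : unit_o v 2%:R) (g : 'M[F]_2) : g \in unitmx -> ~ ZKT v alpha n g -> core_concl g.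
Proof.
move=> gu nZ.
have dg : \det g != 0 by rewrite unitmxE unitfE in gu.
rewrite (mx2_eta g) in dg nZ *.
move: dg nZ; set a := g 0 0; set b := g 0 1; set c := g 1 0; set d := g 1 1 => dg nZ.
have hs : has (fun x => x != 0) [:: a; b; c; d].
  apply/negPn/negP; rewrite -all_predC => /allP h.
  have := h a; have := h b; have := h c; have := h d.
  rewrite !inE !eqxx ?orbT /= !negbK => /(_ isT)/eqP d0 /(_ isT)/eqP c0 /(_ isT)/eqP b0 /(_ isT)/eqP a0.
  by move: dg; rewrite mx2_det a0 b0 c0 d0 !mul0r subrr eqxx.
have [x [xs x0 hx]] := min_seq hs.
have hxi : val_ge v x^-1 (- v x) by rewrite val_geP ?invr_eq0 // vV.
have io : forall y, y \in [:: a; b; c; d] -> in_o v (x^-1 * y).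
  move=> y /hx hy; rewrite /in_o; have := val_geM hxi hy; by rewrite addNr.
have Ha : in_o v (x^-1 * a) by apply: io; rewrite !inE eqxx ?orbT.
have Hb : in_o v (x^-1 * b) by apply: io; rewrite !inE eqxx ?orbT.
have Hc : in_o v (x^-1 * c) by apply: io; rewrite !inE eqxx ?orbT.
have Hd : in_o v (x^-1 * d) by apply: io; rewrite !inE eqxx ?orbT.
have Hg : mx2 a b c d = x *: mx2 (x^-1 * a) (x^-1 * b) (x^-1 * c) (x^-1 * d).
  by rewrite mx2_scale; apply: mx2_eq; field.
have one : [\/ x^-1 * a = 1, x^-1 * b = 1, x^-1 * c = 1 | x^-1 * d = 1].
  move: xs; rewrite !inE => /orP[/eqP ex|/orP[/eqP ex|/orP[/eqP ex|/eqP ex]]];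
   [apply: Or41|apply: Or42|apply: Or43|apply: Or44]; by rewrite -ex mulVf.
have dg' : x^-1 * a * (x^-1 * d) - x^-1 * b * (x^-1 * c) != 0.
  have -> : x^-1 * a * (x^-1 * d) - x^-1 * b * (x^-1 * c) = x^-1 * x^-1 * (a * d - b * c) by field.
  by rewrite !mulf_neq0 ?invr_eq0 // -mx2_det.
have nZ' : ~ ZKT v alpha n (mx2 (x^-1 * a) (x^-1 * b) (x^-1 * c) (x^-1 * d)).
  move=> [[e1 e2] e0 [k hk ek]]; apply: nZ; rewrite Hg ek.
  exists (x * e1, x * e2).
    apply: contra_neq e0 => /= [] [] /eqP; rewrite mulf_eq0 (negbTE x0) /= => /eqP->.
    by move/eqP; rewrite mulf_eq0 (negbTE x0) /= => /eqP->.
  by exists k => //; rewrite (tmat_scale x (e1, e2)) scalerAl.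
have [Y [Y' [h1 h2' h3 h4 h5]]] := core_prim h2 Ha Hb Hc Hd one dg' nZ'.
exists Y, Y'; split => //.
by rewrite Hg -scalerAr -scalerAl h3.
Qed.


Variable unif : F.
Hypothesis unif0 : unif != 0.
Hypothesis vunif : v unif = 1.

Lemma unifX0 (k : nat) : unif ^+ k != 0.
Proof. exact: expf_neq0. Qed.

Lemma v_unifX (k : nat) : v (unif ^+ k) = k%:Z.
Proof.
elim: k => [|k IH]; first by rewrite expr0 v1.
by rewrite exprS hmul ?unifX0 // IH vunif; lia.
Qed.

Lemma val_ge_unifX (k : nat) : val_ge v (unif ^+ k) k%:Z.
Proof. by rewrite val_geP ?unifX0 // v_unifX. Qed.

Lemma val_ge_unifXV (k : nat) : val_ge v (unif ^- k) (- k%:Z).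
Proof. by rewrite val_geP ?invr_eq0 ?unifX0 // vV ?unifX0 // v_unifX. Qed.

Lemma tmat10 : tmat alpha (1, 0) = 1.
Proof. by rewrite /tmat mx2_1 /=; apply: mx2_eq; ring. Qed.

Lemma unit_o1 : unit_o v 1.
Proof. by apply/andP; split; [exact: oner_neq0 | rewrite v1]. Qed.

Lemma val_ge_Min x y m : val_ge v x m -> in_o v y -> val_ge v (x * y) m.
Proof. by move=> hx hy; have := val_geM hx hy; rewrite addr0. Qed.

Lemma K_of_Y (Y : 'M[F]_2) : in_M2o v Y -> Kn v n (1 + unif ^+ n *: Y).
Proof.
move=> hY.
have ht : val_ge v (unif ^+ n) n%:Z := val_ge_unifX n.
have hti : in_o v (unif ^+ n) by apply: val_ge_in ht _.
split; last first.
  move=> i j; have -> : 1 + unif ^+ n *: Y - 1 = unif ^+ n *: Y by rewrite addrC addKr.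
  by rewrite mxE; apply: val_ge_Min.
have [h00 h01 h10 h11] := in_M2o_entries hY.
rewrite (mx2_eta Y) mx2_scale mx2_1 mx2_add.
split.
  apply: in_M2o_mx2; apply: in_oD; by [apply: in_o1|apply: in_o0|apply: in_oM].
rewrite mx2_det.
set t := unif ^+ n.
have -> : (1 + t * Y 0 0) * (1 + t * Y 1 1) - (0 + t * Y 0 1) * (0 + t * Y 1 0) =
  1 + t * (Y 0 0 + Y 1 1 + t * (Y 0 0 * Y 1 1 - Y 0 1 * Y 1 0)) by ring.
apply: unit_add; first exact: unit_o1.
apply: val_ge_Min; first by apply: (val_ge_le ht); lia.
repeat first [apply: in_oD | apply: in_oM | apply: in_oN | apply: in_oB | assumption].
Qed.


Lemma two_unit (C : fieldType) (psi : F -> C) (theta : F * F -> C) (a : F) :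
  (forall x, in_o v x -> psi x = 1) -> unit_o v a -> conductorE v theta n.*2 ->
  (forall u : F * F, in_oE v u ->
     psi (etr (emul alpha (escal (unif ^- n * a)) (emul alpha (esqrt F) u))) =
     theta (eadd (escal 1) (emul alpha (escal (unif ^+ n)) u))) ->
  unit_o v 2%:R.
Proof.
move=> psio ua [_ nontriv] hpa.
apply/unit_oP; split.
  by rewrite mulrS mulr1n; apply: in_oD; apply: in_o1.
move=> h2'.
have lt : ((n.*2).-1 < n.*2)%N by rewrite prednK ?double_gt0 //.
apply: (nontriv _ lt) => -[e1 e2] /andP[ue] /andP[/= he1 he2].
rewrite addr0 in he2.
have hm : ((n.*2).-1 %:Z - n%:Z >= 0)%R by lia.
pose u := ((e1 + -1) * unif ^- n, e2 * unif ^- n).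
have hu : in_oE v u.
  apply/andP; split => /=.
    have := val_geM he1 (val_ge_unifXV n) => h; apply: (val_ge_le h); lia.
  have := val_geM he2 (val_ge_unifXV n) => h; apply: (val_ge_le h); lia.
have := hpa u hu.
have -> : eadd (escal 1) (emul alpha (escal (unif ^+ n)) u) = (e1, e2).
  rewrite /eadd /emul /escal /u /=; congr pair; field; exact: unifX0.
move=> <-; apply: psio.
have -> : etr (emul alpha (escal (unif ^- n * a)) (emul alpha (esqrt F) u)) =
   2%:R * (- (alpha * a)) * (unif ^- n * unif ^- n) * e2.
  rewrite /etr /emul /escal /esqrt /u /=; rewrite mulr2n; ring.
have hA : in_o v (- (alpha * a)) by apply: in_oN; apply: in_oM; apply: unit_o_in.
have h := val_geM (val_geM (val_geM h2' hA) (val_geM (val_ge_unifXV n) (val_ge_unifXV n))) he2.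
apply: (val_ge_le h); lia.
Qed.


Lemma ZKT_Y (Y : 'M[F]_2) : in_M2o v Y -> ZKT v alpha n (1 + unif ^+ n *: Y).
Proof.
move=> hY; exists (1, 0).
  by apply/eqP => -[] /eqP; rewrite oner_eq0.
by exists (1 + unif ^+ n *: Y); [apply: K_of_Y | rewrite tmat10 mul1r].
Qed.

Lemma in_M2oZ x (Y : 'M[F]_2) : in_o v x -> in_M2o v Y -> in_M2o v (x *: Y).
Proof. by move=> hx hY i j; rewrite mxE; apply: in_oM. Qed.

Lemma key (h2 : unit_o v 2%:R) (C : fieldType) (psi : F -> C) (theta : F * F -> C) (a : F)
  (chi : 'M[F]_2 -> C) (z0 : F) (g : 'M[F]_2) :
  (forall x y, psi (x + y) = psi x * psi y) -> (forall x, in_o v x -> psi x = 1) ->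
  val_ge v z0 (-1) -> psi z0 != 1 -> unit_o v a -> theta (escal 1) = 1 ->
  is_chi_theta_T v alpha unif n theta psi a chi ->
  g \in unitmx -> ~ ZKT v alpha n g ->
  exists K1, exists K2,
    [/\ ZKT v alpha n K1, ZKT v alpha n K2, K1 * g = g * K2 & chi K1 != chi K2].
Proof.
move=> psiD psio hz0 pz0 ua th1 hchi gu nZ.
have [Y0 [Y0' [hY hY' hYg c0 cn]]] := core h2 gu nZ.
set c := tw Y0 - tw Y0' in c0 cn.
have z00 : z0 != 0 by apply: contra_neq pz0 => ->; apply: psio; apply: in_o0.
have a0 : a != 0 := unit_o_neq0 ua.
set x := z0 * unif ^+ n / (a * c).
have x0 : x != 0 by rewrite /x !mulf_neq0 ?invr_eq0 ?unifX0 ?mulf_neq0.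
have hx : in_o v x.
  rewrite /in_o val_geP // /x hmul ?mulf_neq0 ?invr_eq0 ?unifX0 ?mulf_neq0 //.
  rewrite hmul ?unifX0 // vV ?mulf_neq0 // hmul // v_unifX.
  move: ua => /andP[_ /eqP ->].
  move: hz0 cn; rewrite !val_geP // => q1 q2; lia.
have chiY : forall Y, in_M2o v Y -> chi (1 + unif ^+ n *: Y) = psi (unif ^- n * a * tw Y).
  move=> Y hy; have e0 : ((1 : F), (0 : F)) != (0, 0) by apply/eqP => -[] /eqP; rewrite oner_eq0.
  by have := hchi _ _ e0 hy; rewrite tmat10 mul1r => ->; rewrite [theta _]th1 mul1r.
have psi0 : forall y, psi y != 0.
  move=> y; apply/eqP => h; have := psiD y (- y); rewrite subrr psio ?in_o0 // h mul0r.
  by move/eqP; rewrite oner_eq0.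
exists (1 + unif ^+ n *: (x *: Y0)), (1 + unif ^+ n *: (x *: Y0')).
split.
- by apply: ZKT_Y; apply: in_M2oZ.
- by apply: ZKT_Y; apply: in_M2oZ.
- by rewrite mulrDl mulrDr mul1r mulr1 -!scalerAl -!scalerAr hYg.
have i1 : in_M2o v (x *: Y0) := in_M2oZ hx hY.
have i2 : in_M2o v (x *: Y0') := in_M2oZ hx hY'.
rewrite !chiY //.
have twZ : forall Y, tw (x *: Y) = x * tw Y by move=> Y; rewrite /tw -scalerAr mxtraceZ.
rewrite !twZ.
set A2 := unif ^- n * a * (x * tw Y0').
have -> : unif ^- n * a * (x * tw Y0) = z0 + A2.
  have -> : tw Y0 = c + tw Y0' by rewrite /c subrK.
  rewrite /A2 /x; field.
  by rewrite ?unifX0 ?a0 ?c0.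
rewrite psiD; apply: contra_neq pz0 => h.
by apply: (mulIf (psi0 A2)); rewrite mul1r.
Qed.


Lemma ZKT_unit (K : 'M[F]_2) : ZKT v alpha n K -> K \in unitmx.
Proof.
move=> [[e1 e2] e0 [k' [[_ hk] _] ->]].
rewrite unitmxE unitfE -mulmxE det_mulmx mulf_neq0 //; last exact: unit_o_neq0.
rewrite /tmat mx2_det /=.
have [z2|z2] := eqVneq e2 0.
  move: e0; rewrite z2 => e0; have e10 : e1 != 0 by apply: contra_neq e0 => ->.
  have -> : e1 * e1 - 0 * (- alpha * 0) = e1 * e1 by ring.
  by rewrite mulf_neq0.
apply/eqP => h; apply/(negP (hnsq (e1 / e2))); apply/eqP.
have : e1 * e1 = - alpha * (e2 * e2).
  by apply/eqP; rewrite -subr_eq0; rewrite -h; apply/eqP; ring.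
move=> h'; rewrite mulf_div h' -mulrA divff ?mulr1 // mulf_neq0 //.
Qed.

End Val.

Unset Implicit Arguments.
Set Strict Implicit.

Theorem proposition3p2
  (F : fieldType) (v : F -> int) (unif : F) (C : numClosedFieldType)
  (psi : F -> C) (n : nat) (alpha : F) (theta : F * F -> C) (a : F)
  (chi : 'M[F]_2 -> C) (V : lmodType C) (rho : 'M[F]_2 -> V -> V)
  (ip : V -> V -> C) (v0 : V) :
  (* F, o, p, unif, odd residue cardinality; psi *)
  nonarch_local_field_odd v unif ->
  std_add_char v psi ->
  (1 <= n)%N ->
  (* inert torus T_alpha in canonical form *)
  unit_o v alpha -> (forall z : F, z * z != - alpha) ->
  (* theta_pi : character of E^x, a(theta_pi) = 2n, trivial on F^x *)
  is_charE alpha theta ->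
  conductorE v theta n.*2 ->
  (forall x : F, x != 0 -> theta (escal x) = 1) ->
  (* a_{theta,T} *)
  unit_o v a ->
  (forall u : F * F, in_oE v u ->
     psi (etr (emul alpha (escal (unif ^- n * a)) (emul alpha (esqrt F) u))) =
     theta (eadd (escal 1) (emul alpha (escal (unif ^+ n)) u))) ->
  (* chi_pi = chi_{theta_pi,T} on ZK_T(n) *)
  is_chi_theta_T v alpha unif n theta psi a chi ->
  (* pi : a representation of G with trivial central character, *)
  (* pi ~= c-Ind_{ZK_T(n)}^G chi_{theta_pi,T}                     *)
  is_rep rho ->
  (forall z : F, z != 0 -> forall x : V, rho (z%:M) x = x) ->
  iso_cInd rho (ZKT v alpha n) chi ->
  (* G-invariant inner product *)
  is_inv_inner_product rho ip ->
  (* v0 minimal vector for T *)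
  v0 != 0 ->
  (forall k, ZKT v alpha n k -> rho k v0 = chi k *: v0) ->
  forall g : 'M[F]_2, g \in unitmx ->
    (ZKT v alpha n g -> ip (rho g v0) v0 / ip v0 v0 = chi g) /\
    (~ ZKT v alpha n g -> ip (rho g v0) v0 / ip v0 v0 = 0).
Proof.
move=> [[hmul hadd] [unif0 vunif] hcomp _ _] [psiD psio [z0 [hz0 pz0]]] hn halpha hnsq
  _ hcond htheta ua hpa hchi [rhoL rho1 rhoM] _ _ [ipL ipC ippos ipinv] v00 hv0 g gu.
have h2 := two_unit hmul hadd halpha hn unif0 vunif psio ua hcond hpa.
have ip0 : forall z, ip 0 z = 0.
  move=> z; have := ipL (-1) z z z; rewrite scaleN1r addNr mulN1r addNr //.
have ipZ : forall c x z, ip (c *: x) z = c * ip x z.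
  by move=> c x z; have := ipL c x 0 z; rewrite addr0 ip0 addr0.
have ipZr : forall c x z, ip z (c *: x) = c^* * ip z x.
  move=> c x z; rewrite ipC ipZ rmorphM /=; congr (_ * _).
  by rewrite ipC conjCK.
have ipv0 : ip v0 v0 != 0 by apply: lt0r_neq0; apply: ippos.
have rho0 : forall h, h \in unitmx -> rho h 0 = 0.
  move=> h hu; have := rhoL h hu (-1) v0 v0; rewrite scaleN1r addNr => ->.
  by rewrite scaleN1r addNr.
have rhoZ : forall h, h \in unitmx -> forall c x, rho h (c *: x) = c *: rho h x.
  by move=> h hu c x; have := rhoL h hu c x 0; rewrite !addr0 rho0 // addr0.
split.
  move=> Hg; rewrite hv0 // ipZ mulfK //.
move=> nH.
have th1 : theta (escal 1) = 1 by apply: htheta; exact: oner_neq0.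
have [K1 [K2 [H1 H2 HK chn]]] :=
  key hmul hadd hcomp halpha hnsq hn unif0 vunif h2 psiD psio hz0 pz0 ua th1 hchi gu nH.
have u1 := ZKT_unit hnsq H1; have u2 := ZKT_unit hnsq H2.
have nrm : chi K1 * (chi K1)^* = 1.
  apply: (mulIf ipv0); rewrite mul1r -{2}(ipinv K1 u1 v0 v0) hv0 //.
  by rewrite ipZ ipZr mulrA.
set X := ip (rho g v0) v0.
have hX : rho K1 (rho g v0) = chi K2 *: rho g v0.
  by rewrite -rhoM // HK rhoM // hv0 // rhoZ.
have eX : X = chi K2 * ((chi K1)^* * X).
  have e1 : X = ip (rho K1 (rho g v0)) (rho K1 v0) by rewrite ipinv.
  by rewrite hX (hv0 K1 H1) ipZ ipZr -/X in e1.
have : (chi K1 - chi K2) * X = 0.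
  have e2 : chi K1 * X = chi K2 * X by rewrite {1}eX mulrCA [chi K1 * _]mulrA nrm mul1r.
  by rewrite mulrBl e2 subrr.
move/eqP; rewrite mulf_eq0 subr_eq0 (negbTE chn) /= => /eqP ->.
by rewrite mul0r.
Qed.
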